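(* Let $R$ be a $*$-reducing ring, let $p,q\in R$ be projections, and put $\overline{p}=1-p$, $\overline{q}=1-q$. Then the following are equivalent: (1) $p+q-pq$ is MP invertible; (2) $p+\overline{p}q\overline{p}$ is MP invertible; (3) $\overline{p}q\overline{p}$ is MP invertible; (4) $q-pq$ is MP invertible; (5) $q-qp$ is MP invertible; (6) $p+q-qp$ is MP invertible; (7) $q+\overline{q}p\overline{q}$ is MP invertible; (8) $\overline{q}p\overline{q}$ is MP invertible; (9) $p-qp$ is MP invertible; (10) $p-pq$ is MP invertible.
   Context: $R$ is an associative ring with identity $1$ and an involution $a\mapsto a^*$ (satisfying $(a^* )^*=a$, $(a+b)^*=a^*+b^*$, $(ab)^*=b^*a^*$). $R$ is $*$-reducing if $a^*a=0$ implies $a=0$ for all $a\in R$. An element $a$ is MP invertible if there is $b$ with $aba=a$, $bab=b$, $(ab)^*=ab$, $(ba)^*=ba$; this $b$ is unique and written $a^{\dagger}$. A projection is an element $p$ with $p^2=p=p^*$. *)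

(* Defs.v *)
From mathcomp Require Import all_boot all_algebra.
Set Implicit Arguments. Unset Strict Implicit. Unset Printing Implicit Defensive.
Import GRing.Theory.
Local Open Scope ring_scope.

Definition is_involution (R : pzRingType) (star : R -> R) : Prop :=
  [/\ forall a, star (star a) = a,
      forall a b, star (a + b) = star a + star b &
      forall a b, star (a * b) = star b * star a].

Definition star_reducing (R : pzRingType) (star : R -> R) : Prop :=
  forall a : R, star a * a = 0 -> a = 0.

Definition is_projection (R : pzRingType) (star : R -> R) (p : R) : Prop :=
  p * p = p /\ star p = p.

Definition MP_invertible (R : pzRingType) (star : R -> R) (a : R) : Prop :=
  exists b : R, [/\ a * b * a = a, b * a * b = b,
                    star (a * b) = a * b & star (b * a) = b * a].

(* Main.v *)
Require Import Defs.
From mathcomp Require Import all_boot all_algebra.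
Import GRing.Theory.
Local Open Scope ring_scope.

Lemma lift2 {R : pzRingType} {a b r : R} : a * b = r -> forall u, u * a * b = u * r.
Proof. by move=> H u; rewrite -H mulrA. Qed.
Lemma lift3 {R : pzRingType} {a b c r : R} : a * b * c = r -> forall u, u * a * b * c = u * r.
Proof. by move=> H u; rewrite -H !mulrA. Qed.
Lemma lift4 {R : pzRingType} {a b c d r : R} : a * b * c * d = r -> forall u, u * a * b * c * d = u * r.
Proof. by move=> H u; rewrite -H !mulrA. Qed.

Lemma star0 {R : pzRingType} {star : R -> R} (Hinv : is_involution star) : star 0 = 0.
Proof.
case: Hinv => _ Hadd _.
have h := Hadd 0 0; rewrite addr0 in h.
have : star 0 + 0 = star 0 + star 0 by rewrite addr0.
by move/addrI.
Qed.

Lemma starN {R : pzRingType} {star : R -> R} (Hinv : is_involution star) x : star (- x) = - star x.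
Proof.
have h0 := star0 Hinv.
case: Hinv => _ Hadd _.
apply/eqP; rewrite -addr_eq0 -Hadd addrC subrr h0 //.
Qed.

Lemma starB {R : pzRingType} {star : R -> R} (Hinv : is_involution star) x y : star (x - y) = star x - star y.
Proof. have h := starN Hinv y. case: Hinv => _ Hadd _. by rewrite Hadd h. Qed.

Lemma star1 {R : pzRingType} {star : R -> R} (Hinv : is_involution star) : star 1 = 1.
Proof.
case: Hinv => Hss _ Hmul.
by rewrite -[star 1]mulr1 -{2}(Hss 1) -Hmul mulr1 Hss.
Qed.

Lemma MP_star {R : pzRingType} {star : R -> R} (Hinv : is_involution star) a :
  MP_invertible star a -> MP_invertible star (star a).
Proof.
case: Hinv => Hss _ Hmul.
case=> b [h1 h2 h3 h4]; exists (star b).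
have e1 : star a * star b = b * a by rewrite -Hmul h4.
have e2 : star b * star a = a * b by rewrite -Hmul h3.
split.
- by rewrite -!Hmul mulrA h1.
- by rewrite -!Hmul mulrA h2.
- by rewrite e1 h4.
- by rewrite e2 h3.
Qed.

Lemma MP_1314 {R : pzRingType} {star : R -> R} {a y x : R} :
  a * y * a = a -> star (a * y) = a * y -> a * x * a = a -> star (x * a) = x * a ->
  MP_invertible star a.
Proof.
move=> h1 h2 h3 h4; exists (x * a * y); split.
- by rewrite !mulrA h3 h1.
- by rewrite !mulrA (lift3 h1) (lift3 h3).
- by rewrite !mulrA h3 h2.
- by rewrite (lift3 h1) h4.
Qed.

Lemma L4a {R : pzRingType} {star : R -> R} (Hinv : is_involution star) a W :
  a = W * (star a * a) -> exists y, a * y * a = a /\ star (a * y) = a * y.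
Proof.
case: Hinv => Hss Hadd Hmul => Ha.
have Hs : star a = star a * a * star W.
  by rewrite {1}Ha Hmul Hmul Hss.
have e : a * star W = W * star a by rewrite [in RHS]Hs mulrA -Ha.
exists (star W); split; first by rewrite e -mulrA -Ha.
by rewrite Hmul Hss e.
Qed.

Lemma L4b {R : pzRingType} {star : R -> R} (Hinv : is_involution star) a V :
  a = a * star a * V -> exists x, a * x * a = a /\ star (x * a) = x * a.
Proof.
case: Hinv => Hss Hadd Hmul => Ha.
have Hs : star a = star V * (a * star a).
  by rewrite {1}Ha Hmul Hmul Hss.
have e : star V * a = star a * V by rewrite {1}Ha !mulrA -(mulrA (star V)) -Hs.
exists (star V); split; first by rewrite -mulrA e mulrA -Ha.
by rewrite Hmul Hss e.
Qed.

Lemma MP_sym {R : pzRingType} {star : R -> R} (Hinv : is_involution star) c :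
  star c = c -> (MP_invertible star c <-> exists r, c = c * c * r).
Proof.
move=> Hc; split.
- case=> b [h1 h2 h3 h4]; exists (star b).
  case: Hinv => Hss Hadd Hmul.
  by rewrite -{1}h1 -mulrA -h4 Hmul Hc mulrA.
- case=> r Hr.
  have [x [h3 h4]] : exists x, c * x * c = c /\ star (x * c) = x * c.
    by apply: (L4b Hinv c r); rewrite Hc.
  have [y [h1 h2]] : exists y, c * y * c = c /\ star (c * y) = c * y.
    apply: (L4a Hinv c (star r)).
    case: Hinv => Hss Hadd Hmul.
    by rewrite -[X in X = _]Hc {1}Hr !Hmul Hc.
  exact: (MP_1314 h1 h2 h3 h4).
Qed.

Lemma cancel_ss {R : pzRingType} {star : R -> R} (Hinv : is_involution star)
  (Hred : star_reducing star) a u v :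
  star a * a * u = star a * a * v -> a * u = a * v.
Proof.
move=> H; apply/eqP; rewrite -subr_eq0; apply/eqP; apply: Hred.
have hB := starB Hinv.
case: Hinv => Hss Hadd Hmul.
rewrite -mulrBr Hmul !mulrA mulrBr -!mulrA (mulrA (star a)) (mulrA (star a)) H subrr //.
Qed.

Lemma MP_of_ss {R : pzRingType} {star : R -> R} (Hinv : is_involution star)
  (Hred : star_reducing star) a :
  MP_invertible star (star a * a) -> MP_invertible star a.
Proof.
case=> z [h1 h2 h3 h4].
have Ha : a * (z * star a * a) = a * 1.
  apply: (cancel_ss Hinv Hred); by rewrite !mulrA -(mulrA _ (star a) a) h1 mulr1.
rewrite mulr1 !mulrA in Ha.
have [y [e1 e2]] : exists y, a * y * a = a /\ star (a * y) = a * y.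
  by apply: (L4a Hinv a (a * z)); rewrite !mulrA.
have e3 : a * (z * star a) * a = a by rewrite !mulrA.
have e4 : star (z * star a * a) = z * star a * a by rewrite -mulrA.
exact: (MP_1314 e1 e2 e3 e4).
Qed.

Lemma MP_of_aa {R : pzRingType} {star : R -> R} (Hinv : is_involution star)
  (Hred : star_reducing star) a :
  MP_invertible star (a * star a) -> MP_invertible star a.
Proof.
move=> H.
have H' : MP_invertible star (star (star a) * star a) by case: Hinv H => -> .
have := MP_star Hinv _ (MP_of_ss Hinv Hred _ H').
by case: Hinv => ->.
Qed.

Lemma MP_aa {R : pzRingType} {star : R -> R} (Hinv : is_involution star) a :
  MP_invertible star a -> MP_invertible star (a * star a).
Proof.
case: Hinv => Hss Hadd Hmul.
case=> b [h1 h2 h3 h4]; exists (star b * b).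
have k1 : a * star a * star b = a by rewrite -mulrA -Hmul h4 mulrA h1.
have k2 : b * a * star a = star a by have := congr1 star k1; rewrite !Hmul !Hss mulrA.
have k3 : a * b * star b = star b by rewrite -h3 -Hmul mulrA h2.
have k4 : star b * star a = a * b by rewrite -Hmul h3.
split.
- by rewrite !mulrA k1 (lift3 k2).
- by rewrite !mulrA (lift3 k2) k4 k3.
- by rewrite !mulrA k1 h3.
- by rewrite !mulrA (lift3 k2) k4 h3.
Qed.

Lemma MP_right {R : pzRingType} {star : R -> R} (Hinv : is_involution star) a :
  MP_invertible star a -> exists V, a = a * star a * V.
Proof.
case: Hinv => Hss Hadd Hmul.
case=> b [h1 h2 h3 h4]; exists (star b).
by rewrite -mulrA -Hmul h4 mulrA h1.
Qed.

Lemma corner {R : pzRingType} (p pb c : R) :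
  p * p = p -> p * c = 0 -> c * p = 0 -> pb * c = c -> c * pb = c -> p * pb = 0 ->
  pb * p = 0 ->
  (exists r, c = c * c * r) <-> (exists r, p + c = (p + c) * (p + c) * r).
Proof.
move=> pp pc cp pbc cpb ppb pbp.
have e2 : (p + c) * (p + c) = p + c * c.
  by rewrite mulrDl !mulrDr pp pc cp add0r addr0.
split.
- case=> r Hr; exists (p + pb * r).
  rewrite e2 mulrDl !mulrDr !mulrA pp ppb mul0r addr0 -(mulrA c c p) cp mulr0 add0r.
  by rewrite -(mulrA c c pb) cpb -Hr.
- case=> r Hr; exists r.
  have := congr1 (fun t => pb * t) Hr; rewrite /= e2 !mulrDr pbp pbc add0r mulrDl mulrDr !mulrA pbp mul0r add0r pbc.
  by [].
Qed.

Lemma y13 {R : pzRingType} {star : R -> R} (Hinv : is_involution star) (p d g z : R) :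
  p * p = p -> star p = p -> p * d = 0 -> d * g * d = d -> star (d * g) = d * g ->
  d * z = d * g -> p * z = 0 -> d * g * p = 0 ->
  exists y, (p + d) * y * (p + d) = p + d /\ star ((p + d) * y) = (p + d) * y.
Proof.
move=> pp sp pd dgd sdg dz pz dgp.
have ay : (p + d) * (p - z * d * p + z) = p + d * g.
  rewrite mulrDl !mulrDr !mulrN !mulrA pp pz dz dgd !mul0r oppr0 !addr0 subrr add0r.
  by [].
exists (p - z * d * p + z); rewrite ay; split.
- by rewrite mulrDl !mulrDr pp pd dgp dgd addr0 add0r.
- case: Hinv => Hss Hadd Hmul. by rewrite Hadd sp sdg.
Qed.

Lemma Gmain {R : pzRingType} {star : R -> R} (Hinv : is_involution star)
  (Hred : star_reducing star) (p q : R) :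
  p * p = p -> star p = p -> q * q = q -> star q = q ->
  [/\ MP_invertible star (p + q - p * q) <-> MP_invertible star (q - p * q),
      MP_invertible star (p + (1 - p) * q * (1 - p)) <-> MP_invertible star (q - p * q) &
      MP_invertible star ((1 - p) * q * (1 - p)) <-> MP_invertible star (q - p * q)].
Proof.
move=> pp sp qq sq.
have s1 := star1 Hinv; have sB := starB Hinv.
have [Hss Hadd Hmul] := Hinv.
set pb := 1 - p.
have ppb : p * pb = 0 by rewrite /pb mulrBr mulr1 pp subrr.
have pbp : pb * p = 0 by rewrite /pb mulrBl mul1r pp subrr.
have pbpb : pb * pb = pb by rewrite {1}/pb mulrBl mul1r ppb subr0.
have spb : star pb = pb by rewrite /pb sB s1 sp.
have Hd : q - p * q = pb * q by rewrite /pb mulrBl mul1r.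
have Ha : p + q - p * q = p + pb * q by rewrite -addrA Hd.
rewrite Ha Hd.
have pb1 : pb + p = 1 by rewrite /pb subrK.
clearbody pb.
set c3 := pb * q * pb.
have sd : star (pb * q) = q * pb by rewrite Hmul sq spb.
have sc3 : star c3 = c3 by rewrite /c3 Hmul spb sd mulrA.
have sc2 : star (p + c3) = p + c3 by rewrite Hadd sp sc3.
have E1 : MP_invertible star c3 <-> MP_invertible star (pb * q).
  have -> : c3 = pb * q * star (pb * q) by rewrite sd mulrA -(mulrA pb q q) qq.
  split; [exact: MP_of_aa | exact: MP_aa].
have pc3 : p * c3 = 0 by rewrite /c3 !mulrA ppb !mul0r.
have c3p : c3 * p = 0 by rewrite /c3 -mulrA pbp mulr0.
have pbc3 : pb * c3 = c3 by rewrite /c3 !mulrA pbpb.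
have c3pb : c3 * pb = c3 by rewrite /c3 -mulrA pbpb.
have E2 : MP_invertible star (p + c3) <-> MP_invertible star c3.
  have C := @corner _ p pb c3 pp pc3 c3p pbc3 c3pb ppb pbp.
  split=> [/(MP_sym Hinv _ sc2) H | /(MP_sym Hinv _ sc3) H].
  + by apply/(MP_sym Hinv _ sc3); apply/C.
  + by apply/(MP_sym Hinv _ sc2); apply/C.
set n := pb * q * p.
have np : n * p = n by rewrite /n -mulrA pp.
have nc3 : n * c3 = 0 by rewrite /n /c3 !mulrA (lift2 ppb) mulr0 !mul0r.
have nn : n * n = 0 by rewrite {2}/n !mulrA (lift2 ppb) mulr0 !mul0r.
have Hau : p + pb * q = (1 + n) * (p + c3).
  rewrite mulrDl mul1r mulrDr np nc3 addr0 -addrA; congr (_ + _).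
  by rewrite /c3 /n -mulrDr pb1 mulr1.
have Huu : (1 - n) * (1 + n) = 1.
  by rewrite mulrBl mul1r mulrDr mulr1 nn addr0 addrK.
have Hsa : star (p + pb * q) = (p + c3) * star (1 + n) by rewrite Hau Hmul sc2.
have E3 : MP_invertible star (p + pb * q) <-> MP_invertible star (pb * q).
  split.
  - move=> /(MP_right Hinv) [V HV].
    apply/E1/E2; apply/(MP_sym Hinv _ sc2); exists (star (1 + n) * V).
    have := congr1 (fun t => (1 - n) * t) HV.
    rewrite /= Hsa {1}Hau !mulrA Huu mul1r {1}Hau !mulrA Huu mul1r.
    by [].
  - move=> Hdm.
    have [r Hr] : exists r, p + c3 = (p + c3) * (p + c3) * r.
      by apply/(MP_sym Hinv _ sc2)/E2/E1.
    have [x [h3 h4]] : exists x, (p + pb * q) * x * (p + pb * q) = p + pb * q /\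
        star (x * (p + pb * q)) = x * (p + pb * q).
      apply: (L4b Hinv _ (star (1 - n) * r)).
      rewrite Hsa {2}Hau !mulrA -(mulrA _ (star (1 + n))) -Hmul Huu s1 mulr1.
      by rewrite -(mulrA (1 + n)) -(mulrA (1 + n)) -Hr Hau.
    case: Hdm => g [g1 g2 g3 g4].
    have dd : pb * q = pb * q * pb * star g.
      by rewrite -{1}g1 -mulrA -g4 Hmul sd !mulrA (lift2 qq).
    have k1 : p * (pb * q) = 0 by rewrite mulrA ppb mul0r.
    have k2 : pb * q * (pb * star g * g) = pb * q * g by rewrite !mulrA -dd.
    have k3 : p * (pb * star g * g) = 0 by rewrite !mulrA ppb !mul0r.
    have k4 : pb * q * g * p = 0 by rewrite -g3 Hmul sd -!mulrA pbp !mulr0.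
    have [y [h1 h2]] := y13 Hinv _ _ _ _ pp sp k1 g1 g3 k2 k3 k4.
    exact: (MP_1314 h1 h2 h3 h4).
by split=> //; split=> [/E2/E1 | /E1/E2].
Qed.

Lemma star_iff {R : pzRingType} {star : R -> R} (Hinv : is_involution star) x y :
  star x = y -> (MP_invertible star x <-> MP_invertible star y).
Proof.
move=> <-; split; first exact: MP_star.
by move/(MP_star Hinv); case: Hinv => ->.
Qed.

Theorem corollary2p6 (R : pzRingType) (star : R -> R)
  (Hinv : is_involution star) (Hred : star_reducing star)
  (p q : R) (Hp : is_projection star p) (Hq : is_projection star q) :
  let pb := 1 - p in let qb := 1 - q in
  [<-> MP_invertible star (p + q - p * q);
       MP_invertible star (p + pb * q * pb);
       MP_invertible star (pb * q * pb);
       MP_invertible star (q - p * q);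
       MP_invertible star (q - q * p);
       MP_invertible star (p + q - q * p);
       MP_invertible star (q + qb * p * qb);
       MP_invertible star (qb * p * qb);
       MP_invertible star (p - q * p);
       MP_invertible star (p - p * q)].
Proof.
move=> pb qb; rewrite /pb /qb.
have sB := starB Hinv.
have [Hss Hadd Hmul] := Hinv.
case: Hp => pp sp; case: Hq => qq sq.
have [A1 A2 A3] := Gmain Hinv Hred p q pp sp qq sq.
have [B1 B2 B3] := Gmain Hinv Hred q p qq sq pp sp.
have S45 : MP_invertible star (q - p * q) <-> MP_invertible star (q - q * p).
  apply: (star_iff Hinv (q - p * q)); by rewrite sB Hmul sp sq.
have S16 : MP_invertible star (p + q - p * q) <-> MP_invertible star (p + q - q * p).
  apply: (star_iff Hinv (p + q - p * q)); by rewrite sB Hadd Hmul sp sq.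
have S910 : MP_invertible star (p - q * p) <-> MP_invertible star (p - p * q).
  apply: (star_iff Hinv (p - q * p)); by rewrite sB Hmul sp sq.
rewrite [q + p]addrC in B1.
tfae.
- by move/A1/A2.
- by move/A2/A3.
- by move/A3.
- by move/S45.
- by move/S45/A1/S16.
- by move/B1/B2.
- by move/B2/B3.
- by move/B3.
- by move/S910.
- by move/S910/B1/S16.
Qed.
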